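(* Let $O=\operatorname{Out}^0(A_\Gamma;\mathcal{G},\mathcal{H}^t)$ with $\mathcal{G}$ saturated with respect to $(\mathcal{G},\mathcal{H})$. Let $\operatorname{Aut}(\Gamma)$ be embedded in $\operatorname{Out}(A_\Gamma)$ via permutation of generators and set $\operatorname{Aut}^0(\Gamma)=\operatorname{Aut}(\Gamma)\cap O$. Then $\operatorname{Aut}^0(\Gamma)$ is naturally isomorphic to $\bigoplus_{[v]\in T_\mathcal{G}}\operatorname{Sym}([v])$, i.e. it consists exactly of the graph automorphisms preserving each $\sim$-class setwise, and every permutation of each class (fixing all other vertices) is a graph automorphism lying in $O$.
   Context: $\Gamma$ is a finite simplicial graph with vertex set $V(\Gamma)$. Subgraphs are always full subgraphs and are identified with their vertex sets. $A_\Gamma$ is the right-angled Artin group generated by $V(\Gamma)$ with relations $[v,w]=1$ for adjacent $v,w$. For $\Delta\subseteq\Gamma$, the special subgroup $A_\Delta\le A_\Gamma$ is the subgroup generated by $\Delta$. $\operatorname{lk}(v)$ is the set of vertices adjacent to $v$ and $\operatorname{st}(v)=\operatorname{lk}(v)\cup\{v\}$. An outer automorphism $\Phi$ stabilises a subgroup $H$ if some representative $\phi\in\Phi$ satisfies $\phi(H)=H$, and acts trivially on $H$ if some representative restricts to the identity on $H$. The Laurence generators of $\operatorname{Out}(A_\Gamma)$ are the classes of: inversions $\iota_v$ ($v\mapsto v^{-1}$); transvections $\rho_v^w$ for $v\neq w$ with $\operatorname{lk}(v)\subseteq\operatorname{st}(w)$ ($v\mapsto vw$); partial conjugations $\pi_K^v$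 for $K$ a union of connected components of $\Gamma\setminus\operatorname{st}(v)$ ($u\mapsto vuv^{-1}$ for $u\in K$); all other generators being fixed. $\operatorname{Out}^0(A_\Gamma)$ is the subgroup of $\operatorname{Out}(A_\Gamma)$ generated by these. For families $\mathcal{G},\mathcal{H}$ of special subgroups, $\operatorname{Out}^0(A_\Gamma;\mathcal{G},\mathcal{H}^t)$ is the subgroup of $\operatorname{Out}^0(A_\Gamma)$ consisting of elements stabilising every member of $\mathcal{G}$ and acting trivially on every member of $\mathcal{H}$. $\mathcal{G}$ is saturated with respect to $(\mathcal{G},\mathcal{H})$ if it contains every proper special subgroup of $A_\Gamma$ stabilised by $\operatorname{Out}^0(A_\Gamma;\mathcal{G},\mathcal{H}^t)$. The $\mathcal{G}$-ordering $\preceq$ on $V(\Gamma)$: $v\preceq w$ iff $\operatorname{lk}(v)\subseteq\operatorname{st}(w)$ and for every $A_\Delta\in\mathcal{G}$ with $v\in\Delta$ also $w\in\Delta$; $v\sim w$ iff $v\preceq w$ and $w\preceq v$; $[v]$ denotes the equivalence class and $T_\mathcal{G}$ the set of classes. *)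

(* Defs.v *)
From HB Require Import structures.
From mathcomp Require Import all_boot all_fingroup.
Set Implicit Arguments. Unset Strict Implicit. Unset Printing Implicit Defensive.

Section RAAG.
Variables (V : finType) (e : rel V).

(* A letter (v, false) is the generator v, (v, true) is v^{-1}. *)
Definition word := seq (V * bool).
Definition gen (v : V) : word := [:: (v, false)].
Definition winv (w : word) : word := rev (map (fun p => (p.1, ~~ p.2)) w).

(* Equality in A_Gamma: equivalence generated by free cancellation and
   commutation of adjacent generators, in any context. *)
Inductive weq : word -> word -> Prop :=
| weq_refl w : weq w w
| weq_sym w1 w2 : weq w1 w2 -> weq w2 w1
| weq_trans w1 w2 w3 : weq w1 w2 -> weq w2 w3 -> weq w1 w3
| weq_cancel s t v b : weq (s ++ (v, b) :: (v, ~~ b) :: t) (s ++ t)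
| weq_comm s t v w b c : e v w ->
    weq (s ++ (v, b) :: (w, c) :: t) (s ++ (w, c) :: (v, b) :: t).

(* An endomorphism is given by the images of the generators. *)
Definition subst (f : V -> word) (w : word) : word :=
  flatten (map (fun p => if p.2 then winv (f p.1) else f p.1) w).
(* comp g f = g o f  (first f, then g) *)
Definition comp (g f : V -> word) : V -> word := fun v => subst g (f v).
Definition conjw (g x : word) : word := g ++ x ++ winv g.

Definition lk (v : V) : {set V} := [set w | e v w].
Definition st (v : V) : {set V} := v |: lk v.

(* K is a union of connected components of Gamma \ st(v) *)
Definition comp_union (v : V) (K : {set V}) : Prop :=
  K \subset ~: st v /\
  (forall x y, x \in K -> y \notin st v -> e x y -> y \in K).

(* Laurence generators (as automorphisms) together with their inverses. *)
Inductive laurence : (V -> word) -> Prop :=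
| L_inv v :
    laurence (fun u => if u == v then [:: (v, true)] else gen u)
| L_transv v w : v != w -> lk v \subset st w ->
    laurence (fun u => if u == v then [:: (v, false); (w, false)] else gen u)
| L_transv_inv v w : v != w -> lk v \subset st w ->
    laurence (fun u => if u == v then [:: (v, false); (w, true)] else gen u)
| L_pconj v K : comp_union v K ->
    laurence (fun u => if u \in K then conjw (gen v) (gen u) else gen u)
| L_pconj_inv v K : comp_union v K ->
    laurence (fun u => if u \in K then conjw [:: (v, true)] (gen u) else gen u).

(* Representatives (in Aut(A_Gamma)) of elements of Out^0(A_Gamma): the subgroup
   generated by the Laurence generators, up to equality in A_Gamma. *)
Inductive InO : (V -> word) -> Prop :=
| InO_id : InO gen
| InO_mul L f : laurence L -> InO f -> InO (comp L f)
| InO_eq f f' : InO f -> (forall v, weq (f v) (f' v)) -> InO f'.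

Definition inA (D : {set V}) (x : word) : Prop :=
  exists y : word, all (fun p => p.1 \in D) y /\ weq x y.

(* the outer class of f stabilises A_D: some representative c_g o f maps A_D onto A_D *)
Definition stabilises (f : V -> word) (D : {set V}) : Prop :=
  exists g : word,
    let phi := fun u => conjw g (f u) in
    (forall u, u \in D -> inA D (phi u)) /\
    (forall u, u \in D -> exists y : word,
        all (fun p => p.1 \in D) y /\ weq (subst phi y) (gen u)).

Definition acts_trivially (f : V -> word) (D : {set V}) : Prop :=
  exists g : word, forall u, u \in D -> weq (conjw g (f u)) (gen u).

(* Out^0(A_Gamma; G, H^t), special subgroups identified with vertex sets *)
Definition InOGH (G H : {set {set V}}) (f : V -> word) : Prop :=
  InO f /\ (forall D, D \in G -> stabilises f D) /\
  (forall D, D \in H -> acts_trivially f D).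

Definition saturated (G H : {set {set V}}) : Prop :=
  forall D : {set V}, D != setT ->
    (forall f, InOGH G H f -> stabilises f D) -> D \in G.

Definition preceqG (G : {set {set V}}) (v w : V) : bool :=
  (lk v \subset st w) && [forall D in G, (v \in D) ==> (w \in D)].
Definition simG (G : {set {set V}}) (v w : V) : bool :=
  preceqG G v w && preceqG G w v.

Definition graph_aut (s : {perm V}) : Prop := forall u v, e (s u) (s v) = e u v.
Definition perm_outer (s : {perm V}) : V -> word := fun v => gen (s v).

End RAAG.

(* Main.v *)
Require Import Defs.
From HB Require Import structures.
From mathcomp Require Import all_boot all_fingroup all_algebra.
Set Implicit Arguments. Unset Strict Implicit. Unset Printing Implicit Defensive.
Import GRing.Theory.
Local Open Scope ring_scope.

Section Ab.
Variables (V : finType) (e : rel V).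
Hypothesis e_sym : symmetric e.

Definition sgn (p : V * bool) : int := if p.2 then -1 else 1.
Fixpoint ab (w : word V) (x : V) : int :=
  match w with [::] => 0 | p :: w' => (if p.1 == x then sgn p else 0) + ab w' x end.

Lemma ab_cat s t x : ab (s ++ t) x = ab s x + ab t x.
Proof. by elim: s => [|p s IH] /=; rewrite ?add0r // IH addrA. Qed.

Lemma ab_winv w x : ab (winv w) x = - ab w x.
Proof.
elim: w => [|p w IH]; first by rewrite oppr0.
rewrite /winv map_cons rev_cons -cats1 ab_cat -/(winv w) IH /= addr0 opprD.
by rewrite addrC; case: (p.1 == x); rewrite /sgn /=; case: p.2; rewrite ?oppr0 ?opprK.
Qed.

Lemma ab_weq w1 w2 x : weq e w1 w2 -> ab w1 x = ab w2 x.
Proof.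
elim=> [w|? ? _ IH|? ? ? _ IH1 _ IH2|s t v b|s t v w b c _] //.
- by rewrite IH1 IH2.
- rewrite !ab_cat /=; congr (_ + _).
  by case: (v == x); rewrite ?add0r // addrA /sgn; case: b => /=; rewrite ?addNr ?subrr add0r.
- rewrite !ab_cat /=; congr (_ + _).
  by rewrite addrCA.
Qed.

Lemma ab_conjw g w x : ab (conjw g w) x = ab w x.
Proof. by rewrite /conjw !ab_cat ab_winv addrCA subrr addr0. Qed.

Lemma ab_gen u x : ab (gen u) x = if u == x then 1 else 0.
Proof. by rewrite /= addr0. Qed.

Lemma ab_supp w x : ab w x != 0 -> x \in map fst w.
Proof.
elim: w => [|p w IH]; first by [].
rewrite /=.
rewrite in_cons; case: (p.1 =P x) => [->|_]; first by rewrite eqxx.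
by rewrite add0r orbC => /IH ->.
Qed.

Lemma ab_subst (L : V -> word V) w x :
  ab (subst L w) x = \sum_(y : V) ab w y * ab (L y) x.
Proof.
elim: w => [|p w IH] /=.
  by rewrite big1 // => y _; rewrite mul0r.
rewrite /subst /= -/(subst L w) ab_cat IH.
under eq_bigr => y _ do rewrite mulrDl.
rewrite big_split /=; congr (_ + _).
rewrite (bigD1 p.1) //= eqxx big1 ?addr0.
  by rewrite /sgn; case: p.2; rewrite ?ab_winv ?mulN1r ?mul1r.
by move=> y; rewrite eq_sym => /negbTE ->; rewrite mul0r.
Qed.

Lemma sum_neq0 (F : V -> int) : \sum_y F y != 0 -> exists y, F y != 0.
Proof.
have [y Hy|H0] := pickP (fun y => F y != 0); first by exists y.
by rewrite big1 ?eqxx // => y _; apply/eqP; rewrite -[_ == _]negbK H0.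
Qed.


Definition gdom (u w : V) := lk e u \subset st e w.

Lemma in_lk u y : (y \in lk e u) = e u y.
Proof. by rewrite /lk inE. Qed.
Lemma in_st u y : (y \in st e u) = (y == u) || e u y.
Proof. by rewrite /st in_setU1 in_lk. Qed.

Lemma gdom_refl u : gdom u u.
Proof. by apply/subsetP => y; rewrite in_lk in_st orbC => ->. Qed.

Lemma gdom_trans u w x : gdom u w -> gdom w x -> gdom u x.
Proof.
move=> /subsetP H1 /subsetP H2; apply/subsetP => y; rewrite in_lk => euy.
have := H1 y; rewrite in_lk in_st => /(_ euy) /orP[/eqP yw|ewy]; last first.
  by apply: H2; rewrite in_lk.
subst y.
have := H2 u; rewrite in_lk in_st e_sym => /(_ euy) /orP[/eqP ux|exu].
  by subst u; rewrite in_st euy orbT.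
have := H1 x; rewrite in_lk in_st e_sym => /(_ exu) /orP[/eqP xw|ewx].
  by subst x; rewrite in_st eqxx.
by rewrite in_st e_sym ewx orbT.
Qed.

Definition Pinv (f : V -> word V) := forall v x, ab (f v) x != 0 -> gdom v x.

Lemma in_gen (u x : V) : (x \in map fst (gen u)) = (x == u).
Proof. by rewrite /= inE. Qed.

Lemma P_laurence L : laurence e L -> Pinv L.
Proof.
case=> [v|v w _ H|v w _ H|v K _|v K _] u x.
- case: (u =P v) => [->|_] /ab_supp; rewrite ?in_gen /= ?inE ?orbF => /eqP ->;
    exact: gdom_refl.
- case: (u =P v) => [->|_] /ab_supp; rewrite ?in_gen /= ?inE ?orbF.
    by case/orP => /eqP ->; [exact: gdom_refl|].
  by move/eqP ->; exact: gdom_refl.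
- case: (u =P v) => [->|_] /ab_supp; rewrite ?in_gen /= ?inE ?orbF.
    by case/orP => /eqP ->; [exact: gdom_refl|].
  by move/eqP ->; exact: gdom_refl.
- by case: (u \in K); rewrite ?ab_conjw => /ab_supp; rewrite in_gen => /eqP ->; exact: gdom_refl.
- by case: (u \in K); rewrite ?ab_conjw => /ab_supp; rewrite in_gen => /eqP ->; exact: gdom_refl.
Qed.

Lemma P_comp L f : Pinv L -> Pinv f -> Pinv (Defs.comp L f).
Proof.
move=> PL Pf v x; rewrite /Defs.comp ab_subst => /sum_neq0 [y].
rewrite mulf_eq0 negb_or => /andP[H1 H2].
exact: gdom_trans (Pf _ _ H1) (PL _ _ H2).
Qed.

Lemma P_InO f : InO e f -> Pinv f.
Proof.
elim=> [|L g HL _ IH|g g' _ IH Hw].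
- by move=> v x /ab_supp; rewrite in_gen => /eqP ->; exact: gdom_refl.
- exact: P_comp (P_laurence HL) IH.
- by move=> v x; rewrite -(ab_weq x (Hw v)); apply: IH.
Qed.

End Ab.
Section Fwd.
Variables (V : finType) (e : rel V).
Hypothesis e_sym : symmetric e.
Variables (G H : {set {set V}}).

Lemma pre_refl x : preceqG e G x x.
Proof. by apply/andP; split; [exact: gdom_refl|apply/forall_inP => D _; apply/implyP]. Qed.

Lemma pre_trans x y z : preceqG e G x y -> preceqG e G y z -> preceqG e G x z.
Proof.
move=> /andP[d1 /forall_inP f1] /andP[d2 /forall_inP f2]; apply/andP; split.
  exact: gdom_trans d1 d2.
apply/forall_inP => D HD; apply/implyP => xD.
by have /implyP := f2 D HD; apply; have /implyP := f1 D HD; apply.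
Qed.

Lemma sim_trans x y z : simG e G x y -> simG e G y z -> simG e G x z.
Proof.
move=> /andP[a1 a2] /andP[b1 b2]; apply/andP; split.
  exact: pre_trans a1 b1.
exact: pre_trans b2 a2.
Qed.

Lemma sim_sym x y : simG e G x y = simG e G y x.
Proof. by rewrite /simG andbC. Qed.

Lemma sim_refl x : simG e G x x.
Proof. by rewrite /simG pre_refl. Qed.

Lemma forward (s : {perm V}) : InOGH e G H (perm_outer s) -> forall v, simG e G (s v) v.
Proof.
case=> hO [hG _].
have Hs : forall v, preceqG e G v (s v).
  move=> v; apply/andP; split.
    apply: (P_InO e_sym hO).
    by rewrite /perm_outer ab_gen eqxx.
  apply/forall_inP => D HD; apply/implyP => vD.
  have [g [H1 _]] := hG D HD.
  have [y [Hall Hweq]] := H1 v vD.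
  have : ab y (s v) != 0.
    by rewrite -(ab_weq _ Hweq) ab_conjw /perm_outer ab_gen eqxx.
  move/ab_supp => /mapP [p py ->].
  by have := allP Hall p py.
have Hk : forall k x, preceqG e G x ((s ^+ k)%g x).
  elim=> [|k IH] x; first by rewrite expg0 perm1 pre_refl.
  by rewrite expgS permM; apply: pre_trans (Hs x) (IH (s x)).
move=> v; apply/andP; split; last exact: Hs.
have := Hk (#[s]%g.-1)%N (s v).
by rewrite -permM -expgS prednK ?order_gt0 // expg_order perm1.
Qed.

End Fwd.

Local Close Scope ring_scope.
Section Swap.
Variables (V : finType) (e : rel V).
Hypothesis e_sym : symmetric e.
Hypothesis e_irr : irreflexive e.

Lemma wcanc s t v b w : weq e (s ++ t) w -> weq e (s ++ (v,b)::(v,~~b)::t) w.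
Proof. by move=> h; apply: weq_trans h; apply: weq_cancel. Qed.
Lemma wcomm s t v u b c w : e v u -> weq e (s ++ (u,c)::(v,b)::t) w ->
  weq e (s ++ (v,b)::(u,c)::t) w.
Proof. by move=> h1 h; apply: weq_trans h; apply: weq_comm. Qed.

Lemma swap_InO (sg : {perm V}) a b : a != b -> gdom e a b -> gdom e b a ->
  InO e (perm_outer sg) -> InO e (fun v => gen (tperm a b (sg v))).
Proof.
move=> hab dab dba H0.
have hba : b != a by rewrite eq_sym.
case: (boolP (e a b)) => eab.
  have := InO_mul (L_transv hab dab) (InO_mul (L_transv_inv hba dba)
          (InO_mul (L_transv hab dab) (InO_mul (L_inv e b) H0))).
  move/InO_eq; apply => v; rewrite /Defs.comp /perm_outer.
  case: (tpermP a b (sg v)) => [->|->|ya yb].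
  - rewrite /subst /=; do 4! rewrite ?eqxx ?(negbTE hab) ?(negbTE hba) /=.
    apply: (wcanc (s:=[:: (a,false); (b,false)]) b false).
    apply: (wcomm (s:=[::]) eab).
    by apply: (wcanc (s:=[:: (b,false)]) a false); apply: weq_refl.
  - rewrite /subst /=; do 4! rewrite ?eqxx ?(negbTE hab) ?(negbTE hba) /=.
    by apply: (wcanc (s:=[:: (a,false)]) b false); apply: weq_refl.
  - have ya' : (sg v == a) = false by apply/eqP.
    have yb' : (sg v == b) = false by apply/eqP.
    rewrite /subst /=; do 4! rewrite ?ya' ?yb' /=.
    exact: weq_refl.
have cu : comp_union e b [set a].
  split.
    by rewrite sub1set inE in_st negb_or hab e_sym (negbTE eab).
  move=> x y; rewrite inE => /eqP -> ynst eay; move/subsetP: dab => /(_ y).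
  by rewrite in_lk eay (negbTE ynst) => /(_ isT).
have := InO_mul (L_transv hab dab) (InO_mul (L_transv_inv hba dba)
        (InO_mul (L_transv hab dab) (InO_mul (L_inv e b) (InO_mul (L_pconj_inv cu) H0)))).
move/InO_eq; apply => v; rewrite /Defs.comp /perm_outer.
case: (tpermP a b (sg v)) => [->|->|ya yb].
- rewrite /subst /=; do 5! rewrite ?inE ?eqxx ?(negbTE hab) ?(negbTE hba) /=.
  apply: (wcanc (s:=[::]) b false).
  apply: (wcanc (s:=[::]) a true).
  apply: (wcanc (s:=[:: (b,false)]) b false).
  apply: (wcanc (s:=[:: (b,false)]) a true).
  apply: (wcanc (s:=[:: (b,false)]) b false).
  exact: weq_refl.
- rewrite /subst /=; do 5! rewrite ?inE ?eqxx ?(negbTE hab) ?(negbTE hba) /=.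
  by apply: (wcanc (s:=[:: (a,false)]) b false); apply: weq_refl.
- have ya' : (sg v == a) = false by apply/eqP.
  have yb' : (sg v == b) = false by apply/eqP.
  rewrite /subst /=; do 5! rewrite ?inE ?ya' ?yb' /=.
  exact: weq_refl.
Qed.
End Swap.
Section Back.
Variables (V : finType) (e : rel V).
Hypothesis e_sym : symmetric e.
Hypothesis e_irr : irreflexive e.
Variables (G H : {set {set V}}).
Hypothesis hsat : saturated e G H.

Lemma sim_dom x y : simG e G x y -> gdom e x y /\ gdom e y x.
Proof. by case/andP => /andP[h1 _] /andP[h2 _]; split. Qed.

Lemma sim_in x y : simG e G x y -> forall D, D \in G -> (x \in D) = (y \in D).
Proof.
case/andP => /andP[_ /forall_inP h1] /andP[_ /forall_inP h2] D HD.
by apply/idP/idP => h; [move/implyP: (h1 D HD); apply | move/implyP: (h2 D HD); apply].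
Qed.

Lemma sim_tperm a b x : simG e G a b -> simG e G (tperm a b x) x.
Proof.
move=> hab; case: tpermP => [->|->|_ _]; first by rewrite sim_sym.
  by [].
exact: sim_refl.
Qed.

Lemma InO_class n (s : {perm V}) : #|[set x | s x != x]| <= n ->
  (forall v, simG e G (s v) v) -> InO e (perm_outer s).
Proof.
elim: n s => [|n IH] s Hn Hs;
  have [/eqP E|] := boolP ([set x | s x != x] == set0).
- apply: (InO_eq (InO_id e)) => v.
  have : v \notin [set x | s x != x] by rewrite E inE.
  by rewrite inE negbK => /eqP sv; rewrite /perm_outer sv; apply: weq_refl.
- by rewrite -cards_eq0 -leqn0 Hn.
- apply: (InO_eq (InO_id e)) => v.
  have : v \notin [set x | s x != x] by rewrite E inE.
  by rewrite inE negbK => /eqP sv; rewrite /perm_outer sv; apply: weq_refl.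
case/set0Pn => a; rewrite inE => Ha.
set b := s a.
have hab : a != b by rewrite eq_sym.
have [dba dab] := sim_dom (Hs a).
set s' := (s * tperm a b)%g.
have Hs' : forall v, simG e G (s' v) v.
  move=> v; rewrite /s' permM; apply: (sim_trans e_sym _ (Hs v)).
  by apply: sim_tperm; rewrite sim_sym; exact: Hs a.
have Hsub : [set x | s' x != x] \proper [set x | s x != x].
  apply/properP; split.
    apply/subsetP => x; rewrite !inE; apply: contra => /eqP sx.
    have xa : a != x by apply/eqP => ax; move: Ha; rewrite ax sx eqxx.
    have xb : b != x.
      apply/eqP => bx; have : s b = s a by rewrite bx sx -bx.
      by move/perm_inj => ba; move: Ha; rewrite -/b ba eqxx.
    by rewrite /s' permM sx tpermD.
  exists a; rewrite !inE ?Ha //.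
  by rewrite /s' permM -/b tpermR eqxx.
have := IH s' _ Hs'.
have h1 := proper_card Hsub.
move=> /(_ (leq_trans h1 Hn)) hs'.
have := swap_InO e_sym hab dab dba hs'.
move/InO_eq; apply=> v; rewrite /perm_outer /s' permM tpermK.
exact: weq_refl.
Qed.

Lemma edge_pres (s : {perm V}) : (forall v, simG e G (s v) v) ->
  forall u v, e u v -> e (s u) (s v).
Proof.
move=> Hs.
have D1 x : gdom e x (s x) by have [] := sim_dom (Hs x).
move=> u v euv.
have := subsetP (D1 u) v; rewrite in_lk euv in_st => /(_ isT) /orP[/eqP vsu | esuv].
  have := subsetP (D1 v) u; rewrite in_lk e_sym euv in_st => /(_ isT) /orP[/eqP usv|esvu].
    by rewrite -vsu -usv e_sym.
  have := subsetP (D1 u) (s v); rewrite in_lk e_sym esvu in_st => /(_ isT) /orP[/eqP svv|].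
    have : v = u by apply: (@perm_inj _ s); rewrite -vsu svv.
    by move=> vu; move: euv; rewrite vu e_irr.
  by rewrite -vsu.
have D2 x : gdom e (s x) x by have [] := sim_dom (Hs x).
have := subsetP (D1 v) (s u); rewrite in_lk e_sym esuv in_st => /(_ isT) /orP[/eqP suv|].
  by move: euv; rewrite (perm_inj suv) e_irr.
by rewrite e_sym.
Qed.

Lemma graph_ok (s : {perm V}) : (forall v, simG e G (s v) v) -> graph_aut e s.
Proof.
move=> Hs u v; apply/idP/idP; last exact: edge_pres.
have Hs' : forall v, simG e G ((s^-1)%g v) v.
  by move=> w; have := Hs ((s^-1)%g w); rewrite permKV sim_sym.
by move/(edge_pres Hs'); rewrite !permK.
Qed.

Lemma stab_ok (s : {perm V}) D : (forall v, simG e G (s v) v) -> D \in G ->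
  stabilises e (perm_outer s) D.
Proof.
move=> Hs HD; exists [::]; split => u uD.
  exists (gen (s u)); split.
    by rewrite /= andbT (sim_in (Hs u) HD).
  exact: weq_refl.
exists (gen ((s^-1)%g u)); split.
  by rewrite /= andbT -(sim_in (Hs _) HD) permKV.
by rewrite /subst /perm_outer /= permKV; apply: weq_refl.
Qed.

Lemma act_ok (s : {perm V}) D : (forall v, simG e G (s v) v) -> D \in H ->
  acts_trivially e (perm_outer s) D.
Proof.
move=> Hs HD; exists [::] => u uD.
suff su : s u = u by rewrite /conjw /perm_outer /= su; apply: weq_refl.
have : s u \in [set u].
  have [/eqP ->|ne] := boolP ([set u] == setT); first by rewrite inE.
  have hG : [set u] \in G.
    apply: (hsat ne) => f [_ [_ hH]].
    have [g hg] := hH D HD.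
    exists g; split => x; rewrite inE => /eqP ->; exists (gen u); split.
    - by rewrite /= inE eqxx.
    - exact: hg.
    - by rewrite /= inE eqxx.
    - by rewrite /subst /= cats0; exact: hg.
  by rewrite (sim_in (Hs u) hG) inE.
by rewrite inE => /eqP.
Qed.

Lemma back (s : {perm V}) : (forall v, simG e G (s v) v) ->
  graph_aut e s /\ InOGH e G H (perm_outer s).
Proof.
move=> Hs; split; first exact: graph_ok.
split; first exact: (InO_class (max_card _) Hs).
by split=> D HD; [exact: stab_ok | exact: act_ok].
Qed.

End Back.

Theorem lemma7p7 (V : finType) (e : rel V) (e_sym : symmetric e) (e_irr : irreflexive e)
  (G H : {set {set V}}) (hsat : saturated e G H) :
  (forall s : {perm V}, graph_aut e s ->
     (InOGH e G H (perm_outer s) <-> forall v, simG e G (s v) v)) /\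
  (forall s : {perm V}, (forall v, simG e G (s v) v) ->
     graph_aut e s /\ InOGH e G H (perm_outer s)).
Proof.
split.
- move=> s _; split; first exact: forward e_sym G H s.
  by move=> Hs; case: (back e_sym e_irr hsat Hs).
- by move=> s Hs; exact: (back e_sym e_irr hsat Hs).
Qed.
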